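(* Let $H_1$ and $H_2$ be simple, undirected, connected graphs of girth at least $6$ on the same vertex set $V$. Suppose that $H_1^2 = H_2^2$ and that $u,v,w \in V$ are three vertices such that $uvw$ is a path in both $H_1$ and $H_2$ (i.e. $uv$ and $vw$ are edges of both $H_1$ and $H_2$, with $u,v,w$ distinct). Then $H_1 = H_2$, i.e. $H_1$ and $H_2$ have exactly the same edge set.
   Context: For a simple, undirected, connected graph $H$, its square $H^2$ is the graph on the same vertex set in which two distinct vertices are adjacent if and only if their distance in $H$ is at most $2$. The girth of a graph is the length of its shortest cycle ($\infty$ for a tree). *)

(* Defs.v *)
From mathcomp Require Import all_boot.
Set Implicit Arguments. Unset Strict Implicit. Unset Printing Implicit Defensive.

Definition simple_graph (T : finType) (e : rel T) : Prop :=
  symmetric e /\ irreflexive e.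

Definition connected_graph (T : finType) (e : rel T) : Prop :=
  forall x y : T, connect e x y.

Definition girth_ge (T : finType) (e : rel T) (g : nat) : Prop :=
  forall s : seq T, uniq s -> 3 <= size s -> cycle e s -> g <= size s.

Definition sq_graph (T : finType) (e : rel T) : rel T :=
  fun x y => (x != y) && (e x y || [exists z, e x z && e z y]).

(* Main.v *)
Require Import Defs.
From mathcomp Require Import all_boot.
Set Implicit Arguments. Unset Strict Implicit. Unset Printing Implicit Defensive.

Section S.
Variable T : finType.

Lemma edge_neq (e : rel T) x y : simple_graph e -> e x y -> x != y.
Proof. move=> [_ irr] h; apply/eqP => E; subst; by rewrite irr in h. Qed.

Lemma girth_contra (e : rel T) (s : seq T) :
  girth_ge e 6 -> uniq s -> 3 <= size s -> size s <= 5 -> cycle e s -> False.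
Proof. move=> g U h1 h2 C; have := g s U h1 C; by rewrite leqNgt ltnS h2. Qed.

Ltac solve_uniq := rewrite /= !inE ?negb_or; repeat (apply/andP; split);
  try done; try by rewrite eq_sym.

Lemma noP4 (e : rel T) a b c d : simple_graph e -> girth_ge e 6 ->
  e a b -> e b c -> e c d -> a != c -> b != d -> a != d ->
  ~~ (e a d || [exists z, e a z && e z d]).
Proof.
move=> S g hab hbc hcd nac nbd nad.
have [sym _] := S.
have nab := edge_neq S hab; have nbc := edge_neq S hbc; have ncd := edge_neq S hcd.
apply/negP; case/orP => [h | /existsP [z /andP [h1 h2]]].
- apply: (@girth_contra e [:: a; b; c; d]) => //; first by solve_uniq.
  by rewrite /= hab hbc hcd sym h.
- have naz := edge_neq S h1; have nzd := edge_neq S h2.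
  case: (eqVneq z b) => [E|nzb].
    subst z; apply: (@girth_contra e [:: b; c; d]) => //; first by solve_uniq.
    by rewrite /= hbc hcd sym h2.
  case: (eqVneq z c) => [E|nzc].
    subst z; apply: (@girth_contra e [:: a; b; c]) => //; first by solve_uniq.
    by rewrite /= hab hbc sym h1.
  apply: (@girth_contra e [:: a; b; c; d; z]) => //; first by solve_uniq.
  by rewrite /= hab hbc hcd sym h2 sym h1.
Qed.

Lemma sq_path (e : rel T) x m y : e x m -> e m y -> x != y -> sq_graph e x y.
Proof.
move=> h1 h2 n; rewrite /sq_graph n /=; apply/orP; right; apply/existsP.
by exists m; rewrite h1 h2.
Qed.

Lemma sq_edge (e : rel T) x y : simple_graph e -> e x y -> sq_graph e x y.
Proof. move=> S h; by rewrite /sq_graph (edge_neq S h) h. Qed.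

Lemma lemB (e1 e2 : rel T) u v w x :
  simple_graph e1 -> simple_graph e2 -> girth_ge e1 6 -> girth_ge e2 6 ->
  sq_graph e1 =2 sq_graph e2 -> u != w ->
  e1 u v -> e1 v w -> e2 u v -> e2 v w -> e1 v x -> e2 v x.
Proof.
move=> S1 S2 g1 g2 sq nuw h1uv h1vw h2uv h2vw hvx.
have [sym1 _] := S1; have [sym2 _] := S2.
case: (eqVneq x u) => [->|nxu]; first by rewrite sym2.
case: (eqVneq x w) => [->|nxw]; first by [].
have nvx := edge_neq S1 hvx.
have := sq v x; rewrite (sq_edge S1 hvx) => /esym /andP [_ /orP [//|]].
case/existsP => y /andP [k1 k2].
case: (eqVneq y u) => [E|nyu].
- subst y.
  have := sq x w; rewrite (sq_path (m := v)) ?(sym1 x) // => /esym /andP [_ H].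
  exfalso; move: H; apply/negP; apply: (noP4 (b := u) (c := v)) => //; try (by rewrite sym2); try (by rewrite sym1); try (by rewrite eq_sym).
- have := sq u x; rewrite (sq_path (m := v)) ?(eq_sym u) // => /esym /andP [_ H].
  exfalso; move: H; apply/negP; apply: (noP4 (b := v) (c := y)) => //; try (by rewrite sym2); try (by rewrite sym1); try (by rewrite eq_sym).
Qed.

Lemma lemC (e1 e2 : rel T) a b c y :
  simple_graph e1 -> simple_graph e2 -> girth_ge e1 6 -> girth_ge e2 6 ->
  sq_graph e1 =2 sq_graph e2 ->
  e1 c a -> e2 c a -> e1 a b -> e2 a b -> c != b -> e1 b y -> e2 b y.
Proof.
move=> S1 S2 g1 g2 sq h1ca h2ca h1ab h2ab ncb hby.
have [sym1 _] := S1; have [sym2 _] := S2.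
case: (eqVneq y a) => [->|nya]; first by rewrite sym2.
have nab := edge_neq S1 h1ab; have nby := edge_neq S1 hby.
have nca := edge_neq S1 h1ca.
have nyc : y != c.
  apply/eqP => E; subst y.
  apply: (@girth_contra e1 [:: c; a; b]) => //; try (by rewrite sym2); try (by rewrite sym1); try (by rewrite eq_sym).
    rewrite /= !inE ?negb_or nca ncb nab /=; done.
  by rewrite /= h1ca h1ab hby.
have N1 : ~~ sq_graph e1 y c.
  rewrite /sq_graph nyc /=.
  apply: (noP4 (b := b) (c := a)) => //; try (by rewrite sym2); try (by rewrite sym1); try (by rewrite eq_sym).
move: N1; rewrite sq => N2.
have := sq a y; rewrite (sq_path (m := b)) // ?(eq_sym a) // => /esym /andP [_].
case/orP => [h | /existsP [z /andP [k1 k2]]].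
- exfalso; move/negP: N2; apply; apply: (sq_path (m := a)) => //; try (by rewrite sym2); try (by rewrite sym1); try (by rewrite eq_sym).
- case: (eqVneq z b) => [<-|nzb] //.
  have := sq b y; rewrite (sq_edge S1 hby) => /esym /andP [_ H].
  exfalso; move: H; apply/negP; apply: (noP4 (b := a) (c := z)) => //; try (by rewrite sym2); try (by rewrite sym1); try (by rewrite eq_sym).
Qed.

End S.

Theorem lemma1 (T : finType) (e1 e2 : rel T) (u v w : T) :
  simple_graph e1 -> simple_graph e2 ->
  connected_graph e1 -> connected_graph e2 ->
  girth_ge e1 6 -> girth_ge e2 6 ->
  sq_graph e1 =2 sq_graph e2 ->
  u != v -> v != w -> u != w ->
  e1 u v -> e1 v w -> e2 u v -> e2 v w ->
  e1 =2 e2.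
Proof.
move=> S1 S2 C1 C2 g1 g2 sq nuv nvw nuw h1uv h1vw h2uv h2vw.
have [sym1 _] := S1; have [sym2 _] := S2.
have sq' : sq_graph e2 =2 sq_graph e1 by move=> x y; rewrite sq.
pose P x := forall y, e1 x y = e2 x y.
have Pv : P v.
  move=> y; apply/idP/idP.
  - exact: (lemB S1 S2 g1 g2 sq nuw h1uv h1vw h2uv h2vw).
  - exact: (lemB S2 S1 g2 g1 sq' nuw h2uv h2vw h1uv h1vw).
have Pu : P u.
  have h1wv : e1 w v by rewrite sym1.
  have h2wv : e2 w v by rewrite sym2.
  have h1vu : e1 v u by rewrite sym1.
  have h2vu : e2 v u by rewrite sym2.
  have nwu : w != u by rewrite eq_sym.
  move=> y; apply/idP/idP.
  - exact: (lemC S1 S2 g1 g2 sq h1wv h2wv h1vu h2vu nwu).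
  - exact: (lemC S2 S1 g2 g1 sq' h2wv h1wv h2vu h1vu nwu).
have step : forall s x0, (P x0 /\ exists p, P p /\ e1 p x0) -> path e1 x0 s ->
    (P (last x0 s) /\ exists p, P p /\ e1 p (last x0 s)).
  elim=> [|y s IH] x0 I //= /andP [hxy hp]; apply: IH => //.
  case: I => Px [p [Pp hpx]].
  split; last by exists x0.
  case: (eqVneq p y) => [<-|npy] //.
  have h2px : e2 p x0 by rewrite -Pp.
  have h2xy : e2 x0 y by rewrite -Px.
  move=> z; apply/idP/idP.
  - exact: (lemC S1 S2 g1 g2 sq hpx h2px hxy h2xy npy).
  - exact: (lemC S2 S1 g2 g1 sq' h2px hpx h2xy hxy npy).
move=> x y.
have /connectP [s ps ->] := C1 v x.
have [Px _] := step s v (conj Pv (ex_intro _ u (conj Pu h1uv))) ps.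
exact: Px.
Qed.
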